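(* For every finite graph $G$ on $n \ge 1$ vertices, we have \[f(G) \ge \frac{1}{250}\left(\frac{n}{\hom(G)}\right)^{1/2}.\]
   Context: All graphs are finite and simple. A subset of the vertices of a graph is homogeneous if it induces either a clique or an independent set; $\hom(G)$ denotes the size of the largest homogeneous set of $G$. For a graph $G$, $f(G)$ denotes the largest integer $k$ for which $G$ contains an induced subgraph in which exactly $k$ distinct values occur among the vertex degrees (i.e., an induced subgraph with $k$ distinct degrees). *)

(* Defs.v *)
From mathcomp Require Import all_boot.
From Stdlib Require Import Reals.
Set Implicit Arguments. Unset Strict Implicit. Unset Printing Implicit Defensive.

Definition simple_graph (T : finType) (e : rel T) : Prop :=
  symmetric e /\ irreflexive e.

Definition ideg (T : finType) (e : rel T) (S : {set T}) (v : T) : nat :=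
  #|[set u in S | e v u]|.

Definition num_distinct_degrees (T : finType) (e : rel T) (S : {set T}) : nat :=
  size (undup [seq ideg e S v | v in S]).

Definition fdeg (T : finType) (e : rel T) : nat :=
  \max_(S : {set T}) num_distinct_degrees e S.

Definition clique (T : finType) (e : rel T) (S : {set T}) : bool :=
  [forall x in S, forall y in S, (x != y) ==> e x y].
Definition indep (T : finType) (e : rel T) (S : {set T}) : bool :=
  [forall x in S, forall y in S, ~~ e x y].
Definition homogeneous (T : finType) (e : rel T) (S : {set T}) : bool :=
  clique e S || indep e S.

Definition homn (T : finType) (e : rel T) : nat :=
  \max_(S : {set T} | homogeneous e S) #|S|.

(* Main.v *)
Require Import Defs.
From Stdlib Require Import Lra Psatz.
From mathcomp Require Import all_boot.
From Stdlib Require Import Reals.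
From mathcomp Require Import zify.
Import ssrnat.
Set Implicit Arguments. Unset Strict Implicit. Unset Printing Implicit Defensive.


Lemma bin_mono_half n j : j.*2.+2 <= n -> 'C(n, j) <= 'C(n, j.+1).
Proof.
move=> h; have := mul_bin_left n j.
move=> E; have : j.+1 * 'C(n, j.+1) >= j.+1 * 'C(n, j).
  rewrite E leq_mul2r; apply/orP; right; lia.
by rewrite leq_mul2l.
Qed.

Lemma bin_le_half_aux n d k : k + d = n./2 -> 'C(n, k) <= 'C(n, n./2).
Proof.
elim: d k => [|d IH] k hk; first by rewrite -hk addn0.
apply: leq_trans (IH k.+1 _); last by rewrite addSnnS.
apply: bin_mono_half.
have := odd_double_half n; lia.
Qed.

Lemma bin_le_half n k : 'C(n, k) <= 'C(n, n./2).
Proof.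
have [lenk|] := leqP k n; last by move=> /bin_small ->.
have [kh|hk] := leqP k n./2.
  by apply: (@bin_le_half_aux n (n./2 - k)); lia.
rewrite -bin_sub //; apply: (@bin_le_half_aux n (n./2 - (n - k))).
have := odd_double_half n; lia.
Qed.

Lemma binS_central k : k.+1 * 'C(k.*2.+1, k) = k.*2.+1 * 'C(k.*2, k).
Proof.
have E : k.*2.+1 * 'C(k.*2, k) = k.+1 * 'C(k.*2.+1, k.+1) by exact: mul_bin_diag.
rewrite E -[in RHS](@bin_sub k.*2.+1 k.+1); last lia.
by have -> : k.*2.+1 - k.+1 = k by lia.
Qed.

Lemma binSS_central k : k.+1 * 'C(k.+1.*2, k.+1) = 2 * (k.*2.+1 * 'C(k.*2, k)).
Proof.
have E : k.+1.*2 * 'C(k.*2.+1, k) = k.+1 * 'C(k.+1.*2, k.+1).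
  by have := mul_bin_diag k.+1.*2 k; rewrite doubleS.
rewrite -E -binS_central doubleS; lia.
Qed.

Lemma central_bound k : 'C(k.*2, k) ^ 2 * (3 * k + 1) <= 16 ^ k.
Proof.
elim: k => [|k IH]; first by rewrite bin0.
have E := binSS_central k.
set c := 'C(k.*2, k) in IH E *; set c' := 'C(k.+1.*2, k.+1) in E *.
have H : (k.+1)^2 * (c' ^ 2 * (3 * k.+1 + 1)) <= (k.+1)^2 * (16 * 16 ^ k).
  have -> : (k.+1)^2 * (c' ^ 2 * (3 * k.+1 + 1)) = 4 * (k.*2.+1)^2 * (3 * k + 4) * c^2.
    have E2 : (k.+1 * c')^2 = (2 * (k.*2.+1 * c))^2 by rewrite E.
    rewrite mulnA -expnMn E2; lia.
  have : (k.*2.+1)^2 * (3 * k + 4) <= (k.+1)^2 * 4 * (3 * k + 1) by rewrite -!muln2; nia.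
  move=> h1.
  have s1 := leq_mul h1 (leqnn (c^2)).
  have s2 : (k.+1)^2*4*((3*k+1) * c^2) <= (k.+1)^2*4*16^k.
    by apply: leq_mul => //; rewrite mulnC.
  nia.
by move: H; rewrite leq_mul2l expn_eq0 /= [16 ^ k.+1]expnS.
Qed.

Lemma half_binom_bound a : 'C(a, a./2) ^ 2 * a.+1 <= 4 ^ a.
Proof.
have [k [-> | ->]] : exists k, a = k.*2 \/ a = k.*2.+1.
  exists a./2; have E := odd_double_half a.
  case: (odd a) E => /= E; [right|left]; rewrite -[a in LHS]E //.
- rewrite doubleK.
  have IH := central_bound k.
  have h16 : 4 ^ (k.*2) = 16 ^ k by rewrite -muln2 mulnC expnM.
  rewrite h16; apply: leq_trans IH; apply: leq_mul => //; lia.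
- have -> : (k.*2.+1)./2 = k by have := half_bit_double k true.
  have IH := central_bound k.
  have h16 : 4 ^ (k.*2.+1) = 4 * 16 ^ k by rewrite expnS -muln2 [k * 2]mulnC expnM.
  rewrite h16.
  set c := 'C(k.*2, k) in IH.
  have E := binS_central k.
  set c' := 'C(k.*2.+1, k) in E *.
  have H : (k.+1)^2 * (c' ^ 2 * k.*2.+2) <= (k.+1)^2 * (4 * 16 ^ k).
    have E2 : (k.+1 * c')^2 = (k.*2.+1 * c)^2 by rewrite E.
    rewrite mulnA -expnMn E2.
    have h1 : (k.*2.+1)^2 * k.*2.+2 <= (k.+1)^2 * 4 * (3 * k + 1) by rewrite -!muln2; nia.
    have s1 := leq_mul h1 (leqnn (c^2)).
    have s2 : (k.+1)^2*4*((3*k+1) * c^2) <= (k.+1)^2*4*16^k.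
      by apply: leq_mul => //; rewrite mulnC.
    nia.
  by move: H; rewrite leq_mul2l expn_eq0.
Qed.

Lemma binom_sq_bound a j : 'C(a, j) ^ 2 * a.+1 <= 4 ^ a.
Proof.
apply: leq_trans (half_binom_bound a); apply: leq_mul => //.
by rewrite leq_sqr bin_le_half.
Qed.

Lemma greedy (T : finType) (r : rel T) (D : nat) : symmetric r ->
  forall X : {set T}, (forall x, x \in X -> #|[set y in X | r x y && (y != x)]| <= D) ->
  exists Y : {set T}, [/\ Y \subset X, (forall x y, x \in Y -> y \in Y -> x != y -> ~~ r x y)
     & #|X| <= #|Y| * D.+1].
Proof.
move=> sym X; move: {2}#|X| (leqnn #|X|) => m; elim: m X => [|m IH] X hX hdeg.
  exists set0; split; [exact: sub0set | by move=> x y; rewrite inE | by rewrite cards0; lia].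
case: (set_0Vmem X) => [->|[x xX]].
  exists set0; split; [exact: sub0set | by move=> ? ?; rewrite inE | by rewrite cards0].
set W := x |: [set y in X | r x y && (y != x)].
set Z := X :\: W.
have cW : #|W| <= D.+1 by rewrite cardsU1; have := hdeg x xX; case: (x \in _); lia.
have cZ : #|X| <= #|Z| + D.+1.
  rewrite -(cardsID W X) addnC; apply: leq_add => //.
  by apply: leq_trans _ cW; apply: subset_leq_card; apply: subsetIr.
have xW : x \in W by rewrite !inE eqxx.
have ZX : Z \subset X by apply: subsetDl.
have Zm : #|Z| <= m.
  have : #|Z| < #|X|.
    apply: proper_card; rewrite properE ZX /=; apply/subsetPn; exists x => //.
    by rewrite inE xW.
  lia.
have hdZ : forall z, z \in Z -> #|[set y in Z | r z y && (y != z)]| <= D.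
  move=> z zZ; have zX : z \in X by apply: (subsetP ZX).
  have := hdeg z zX; apply: leq_trans; apply: subset_leq_card.
  by apply/subsetP => y; rewrite !inE => /andP[/andP[_ ->] ->].
have [Y' [Y'Z Y'ind cY']] := IH Z Zm hdZ.
exists (x |: Y'); split.
- by rewrite subUset sub1set xX (subset_trans Y'Z ZX).
- have xnZ y : y \in Y' -> (y != x) && ~~ r x y.
    move=> /(subsetP Y'Z); rewrite !inE negb_or.
    move=> /andP[/andP[yx H] yX]; rewrite yx /=; apply/negP => rxy.
    by move/negP: H; apply; rewrite yX rxy yx.
  move=> a b; rewrite !inE => /orP[/eqP->|aY] /orP[/eqP->|bY]; rewrite ?eqxx //.
  + by move=> _; case/andP: (xnZ b bY).
  + by move=> _; case/andP: (xnZ a aY); rewrite sym.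
  + exact: Y'ind.
- rewrite cardsU1.
  have -> : x \notin Y' by apply/negP => /(subsetP Y'Z); rewrite inE xW.
  lia.
Qed.

Definition Aset (T : finType) (e : rel T) (u v : T) : {set T} :=
  [set w | e u w && ~~ e v w && (w != v)].
Definition aval (T : finType) (e : rel T) (u v : T) : nat :=
  maxn #|Aset e u v| #|Aset e v u|.

Lemma hom_ge (T : finType) (e : rel T) (S : {set T}) :
  homogeneous e S -> #|S| <= homn e.
Proof. by move=> h; rewrite /homn; apply: (@leq_bigmax_cond _ (fun S => homogeneous e S) (fun S => #|S|) S h). Qed.

Lemma cluster (T : finType) (e : rel T) (u : T) (s : nat) :
  simple_graph e -> #|[set v | aval e u v <= s]| <= (2 * s + 3) * homn e.
Proof.
move=> [sym irr].
set X := [set v | aval e u v <= s].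
set N := [set v | e u v].
have XE : #|X| = #|X :&: N| + #|X :\: N| by rewrite cardsID.
have sym' : symmetric (fun x y => ~~ e x y) by move=> x y; rewrite sym.
have hd0 : forall w, w \in X :\: N -> #|[set y in X :\: N | e w y && (y != w)]| <= s.+1.
  move=> w; rewrite !inE => /andP[_ wX].
  have : #|u |: Aset e w u| <= s.+1.
    rewrite cardsU1 -add1n; apply: leq_add; first by case: (_ \notin _).
    by apply: leq_trans wX; rewrite /aval leq_maxr.
  apply: leq_trans; apply: subset_leq_card; apply/subsetP => y.
  rewrite !inE => /andP[/andP[nuy _] /andP[ewy _]].
  by case: eqP => //= _; rewrite ewy nuy.
have [Y0 [Y0X Y0ind cY0]] := @greedy T e s.+1 sym (X :\: N) hd0.
have hY0 : #|Y0| <= homn e.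
  apply: hom_ge; apply/orP; right; apply/forallP => x; apply/implyP => xY.
  apply/forallP => y; apply/implyP => yY.
  case: (eqVneq x y) => [->|xy]; first by rewrite irr.
  exact: Y0ind.
have hd1 : forall w, w \in X :&: N -> #|[set y in X :&: N | ~~ e w y && (y != w)]| <= s.
  move=> w; rewrite !inE => /andP[wX _].
  apply: leq_trans wX; apply: leq_trans (leq_maxl _ _); apply: subset_leq_card.
  apply/subsetP => y; rewrite !inE => /andP[/andP[_ euy] /andP[newy ->]].
  by rewrite euy newy.
have [Y1 [Y1X Y1ind cY1]] := @greedy T (fun x y => ~~ e x y) s sym' (X :&: N) hd1.
have hY1 : #|Y1| <= homn e.
  apply: hom_ge; apply/orP; left; apply/forallP => x; apply/implyP => xY.
  apply/forallP => y; apply/implyP => yY; apply/implyP => xy.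
  by have := Y1ind x y xY yY xy; rewrite negbK.
rewrite XE.
have h1 := leq_trans cY1 (leq_mul hY1 (leqnn s.+1)).
have h0 := leq_trans cY0 (leq_mul hY0 (leqnn s.+2)).
nia.
Qed.

Lemma cs_seq (I : Type) (s : seq I) (F : I -> nat) :
  (\sum_(i <- s) F i) ^ 2 <= size s * \sum_(i <- s) F i ^ 2.
Proof.
elim: s => [|a s IH]; first by rewrite !big_nil.
rewrite !big_cons /=.
set X := \sum_(i <- s) F i in IH *; set Y := \sum_(i <- s) F i ^ 2 in IH *.
set n := size s in IH *; set b := F a.
case: n IH => [|n] IH.
  have -> : X = 0 by move: IH; rewrite mul0n; case: X.
  lia.
have h : n.+1 * (2 * b * X) <= n.+1 * (n.+1 * b ^ 2 + Y).
  have sq : 2 * (n.+1 * b) * X <= (n.+1 * b) ^ 2 + X ^ 2.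
    have [h1 _] := nat_AGM2 (n.+1 * b) X; move: h1; rewrite sqrnD; lia.
  nia.
rewrite leq_mul2l /= in h.
nia.
Qed.

Lemma sum_partition (T : finType) (f : T -> nat) (S : {set T}) (g : T -> nat) :
  \sum_(u in S) g u = \sum_(d <- undup [seq f v | v in S]) \sum_(u in S | f u == d) g u.
Proof.
symmetry.
rewrite (eq_bigr (fun d => \sum_(u in S) (if f u == d then g u else 0))); last first.
  by move=> d _; rewrite big_mkcondr.
rewrite exchange_big /=; apply: eq_bigr => u uS.
rewrite -big_mkcond /= big_const_seq.
have -> : count (fun d => f u == d) (undup [seq f v | v in S]) = 1.
  rewrite (eq_count (a2 := pred1 (f u))); last by move=> d /=; rewrite eq_sym.
  rewrite count_uniq_mem ?undup_uniq // mem_undup.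
  by rewrite (image_f (fun v => f v) uS).
by rewrite /= addn0.
Qed.

Lemma cs_degrees (T : finType) (f : T -> nat) (S : {set T}) :
  #|S| ^ 2 <= size (undup [seq f v | v in S]) * \sum_(u in S) \sum_(v in S) (f u == f v).
Proof.
set D := undup [seq f v | v in S].
set c := fun d => \sum_(u in S | f u == d) 1.
have h1 : #|S| = \sum_(d <- D) c d by rewrite -sum1_card (sum_partition f).
have h2 : \sum_(u in S) \sum_(v in S) (f u == f v) = \sum_(d <- D) c d ^ 2.
  rewrite (sum_partition f); apply: eq_bigr => d _.
  rewrite (eq_bigr (fun u => c d)); last first.
    move=> u /andP[_ /eqP ->]; rewrite /c big_mkcond /= [RHS]big_mkcond /=.
    by apply: eq_bigr => v _; rewrite [d == _]eq_sym; case: (v \in S); case: (f v == d).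
  rewrite expnS expn1 {2}/c big_distrl /=; apply: eq_bigr => i _; by rewrite mul1n.
by rewrite h1 h2; apply: cs_seq.
Qed.

Lemma sumb_card (I : finType) (P : pred I) (b : pred I) :
  \sum_(i | P i) (b i : nat) = #|[set i | P i && b i]|.
Proof.
rewrite -sum1_card [RHS](eq_bigl (fun i => P i && b i)); last by move=> i; rewrite inE.
by rewrite big_mkcondr /=; apply: eq_bigr => i _; case: (b i).
Qed.

Definition tog (T : finType) (x : T) (S : {set T}) : {set T} :=
  if x \in S then S :\ x else x |: S.

Lemma togK (T : finType) (x : T) : involutive (tog x).
Proof.
move=> S; rewrite /tog; case: (boolP (x \in S)) => xS.
  by rewrite !inE eqxx /= setD1K.
by rewrite !inE eqxx /= setU1K.
Qed.

Lemma in_tog (T : finType) (x y : T) (S : {set T}) :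
  (y \in tog x S) = if y == x then x \notin S else y \in S.
Proof.
rewrite /tog; case: (boolP (x \in S)) => xS; rewrite !inE;
  case: (eqVneq y x) => [->|] //=; by rewrite ?xS.
Qed.

Lemma half_sum (T : finType) (P : pred {set T}) (x : T) :
  (forall S, P (tog x S) = P S) ->
  \sum_(S : {set T}) (P S : nat) = 2 * \sum_(S : {set T}) (P S && (x \in S) : nat).
Proof.
move=> hP.
have E : \sum_(S : {set T}) (P S && (x \in S) : nat) = \sum_(S : {set T}) (P S && (x \notin S) : nat).
  rewrite (reindex_inj (can_inj (togK x))) /=.
  by apply: eq_bigr => S _; rewrite hP in_tog eqxx.
rewrite mul2n -addnn {2}E -big_split /=; apply: eq_bigr => S _.
by case: (P S); case: (x \in S).
Qed.

Lemma sum_all_sets (T : finType) : \sum_(S : {set T}) 1 = 2 ^ #|T|.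
Proof.
rewrite sum1_card.
have -> : #|{: {set T}}| = #|[set: {set T}]| by rewrite cardsT.
by rewrite -powersetT card_powerset cardsT.
Qed.

Lemma cnt1E (T : finType) (x : T) : 2 * \sum_(S : {set T}) (x \in S : nat) = 2 ^ #|T|.
Proof.
rewrite -sum_all_sets (half_sum (P := predT) (x := x)) //.
Qed.

Lemma cnt2E (T : finType) (x y : T) : x != y ->
  2 * \sum_(S : {set T}) ((x \in S) && (y \in S) : nat) = \sum_(S : {set T}) (x \in S : nat).
Proof.
move=> xy; rewrite (half_sum (P := fun S => x \in S) (x := y)) //.
by move=> S; rewrite in_tog (negbTE xy).
Qed.

Lemma fiber (T : finType) (A : {set T}) (Pr : {set T} -> bool) (k : {set T} -> nat) :
  (forall S, Pr S = Pr (S :\: A)) -> (forall S, k S = k (S :\: A)) ->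
  (\sum_(S : {set T}) (Pr S && (#|S :&: A| == k S) : nat)) * 2 ^ #|A| <=
  'C(#|A|, #|A|./2) * \sum_(S : {set T}) (Pr S : nat).
Proof.
move=> hPr hk.
rewrite (partition_big (fun S => S :\: A) xpredT) //.
rewrite [X in _ <= _ * X](partition_big (fun S => S :\: A) xpredT) //.
rewrite big_distrl big_distrr /=; apply: leq_sum => Y _.
rewrite !sumb_card.
set G := [set S | _ && _]; set F := [set S | _ && _].
have fibG S : S \in G -> [/\ S :\: A = Y, Pr S & #|S :&: A| = k S].
  by rewrite inE => /andP[/eqP <- /andP[-> /eqP ->]].
have c1 : #|G| <= 'C(#|A|, #|A|./2).
  apply: leq_trans (bin_le_half _ (k Y)).
  rewrite -cards_draws.
  have inj : {in G &, injective (fun S => S :&: A)}.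
    move=> S1 S2 /fibG[h1 _ _] /fibG[h2 _ _] /= hI.
    by rewrite -(setID S1 A) -(setID S2 A) hI h1 h2.
  rewrite -(card_in_imset inj); apply: subset_leq_card; apply/subsetP => Z.
  case/imsetP => S /fibG[h1 _ h3] ->; rewrite inE subsetIr /= h3 hk h1.
  exact: eqxx.
have c2 : G != set0 -> 2 ^ #|A| <= #|F|.
  case/set0Pn => S0 /fibG[h1 h2 _].
  have YA : Y :&: A = set0.
    rewrite -h1; apply/setP => x; rewrite !inE; case: (x \in A) => //=; by rewrite andbF.
  have PrY : Pr Y by rewrite -h1 -hPr.
  rewrite -card_powerset.
  have inj : {in powerset A &, injective (fun Z => Y :|: Z)}.
    move=> Z1 Z2; rewrite !inE => z1 z2 /= hU.
    have := congr1 (fun S => S :&: A) hU; rewrite !setIUl YA !set0U.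
    by rewrite (setIidPl z1) (setIidPl z2).
  rewrite -(card_in_imset inj); apply: subset_leq_card; apply/subsetP => S.
  case/imsetP => Z; rewrite inE => ZA ->.
  have e1 : (Y :|: Z) :\: A = Y.
    have ZA0 : Z :\: A = set0 by apply/eqP; rewrite setD_eq0.
    have YA0 : Y :\: A = Y by apply/setDidPl; rewrite -setI_eq0 YA eqxx.
    by rewrite setDUl ZA0 YA0 setU0.
  by rewrite inE e1 eqxx /= hPr e1.
case: (eqVneq G set0) => [->|Gn]; first by rewrite cards0.
apply: leq_trans (_ : 'C(#|A|, #|A|./2) * 2 ^ #|A| <= _).
  by rewrite leq_mul2r c1 orbT.
by rewrite leq_mul2l (c2 Gn) orbT.
Qed.

Lemma ideg_split (T : finType) (e : rel T) (S : {set T}) (x y : T) :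
  irreflexive e -> y \in S ->
  ideg e S x = \sum_(w in S) (e x w && e y w : nat) + #|S :&: Aset e x y| + e x y.
Proof.
move=> irr yS.
have h1 : ideg e S x = \sum_(w in S) (e x w : nat) by rewrite sumb_card.
have h2 : #|S :&: Aset e x y| = \sum_(w in S) (w \in Aset e x y : nat).
  by rewrite sumb_card; apply: eq_card => w; rewrite !inE.
have h3 : \sum_(w in S) ((w == y) && e x y : nat) = e x y.
  rewrite (bigD1 y) //= eqxx /= big1 ?addn0 // => w /andP[_ /negbTE ->] //.
rewrite h1 h2 -h3 -!big_split /=; apply: eq_bigr => w _.
rewrite /Aset inE; case: (eqVneq w y) => [->|wy] /=.
  by rewrite irr andbF /=; case: (e x y).
by rewrite andbT; case: (e x w); case: (e y w).
Qed.

Lemma ideg_eq (T : finType) (e : rel T) (S : {set T}) (u v : T) :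
  simple_graph e -> u \in S -> v \in S ->
  (ideg e S u == ideg e S v) = (#|S :&: Aset e u v| == #|S :&: Aset e v u|).
Proof.
move=> [sym irr] uS vS.
rewrite (ideg_split u irr vS) (ideg_split v irr uS) (sym v u).
have Es : \sum_(w in S) (e v w && e u w : nat) = \sum_(w in S) (e u w && e v w : nat).
  by apply: eq_bigr => w _; rewrite andbC.
by rewrite Es -!addnA eqn_add2l !(addnC _ (e u v)) eqn_add2l.
Qed.

Definition m2 (T : finType) (u v : T) : nat :=
  \sum_(S : {set T}) ((u \in S) && (v \in S) : nat).
Definition cc (T : finType) (e : rel T) (u v : T) : nat :=
  \sum_(S : {set T}) ((u \in S) && (v \in S) && (ideg e S u == ideg e S v) : nat).
Definition PP (T : finType) (e : rel T) (S : {set T}) : nat :=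
  \sum_(u in S) \sum_(v in S) (ideg e S u == ideg e S v : nat).

Lemma sumsq (T : finType) : \sum_(S : {set T}) #|S| ^ 2 = \sum_(u : T) \sum_(v : T) m2 u v.
Proof.
have E (S : {set T}) : #|S| ^ 2 = \sum_(u : T) \sum_(v : T) ((u \in S) && (v \in S) : nat).
  have cS : #|S| = \sum_u (u \in S : nat).
    by rewrite sumb_card; apply: eq_card => x; rewrite inE.
  rewrite expnS expn1 {1}cS big_distrl /=; apply: eq_bigr => u _.
  rewrite cS big_distrr /=; apply: eq_bigr => v _.
  by case: (u \in S); case: (v \in S).
rewrite (eq_bigr _ (fun S _ => E S)) exchange_big /=; apply: eq_bigr => u _.
by rewrite exchange_big.
Qed.

Lemma sumPP (T : finType) (e : rel T) : \sum_(S : {set T}) PP e S = \sum_(u : T) \sum_(v : T) cc e u v.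
Proof.
have E (S : {set T}) : PP e S = \sum_(u : T) \sum_(v : T) ((u \in S) && (v \in S) && (ideg e S u == ideg e S v) : nat).
  rewrite /PP big_mkcond /=; apply: eq_bigr => u _.
  case: (u \in S) => /=; last by rewrite big1.
  by rewrite big_mkcond /=; apply: eq_bigr => v _; case: (v \in S).
rewrite (eq_bigr _ (fun S _ => E S)) exchange_big /=; apply: eq_bigr => u _.
by rewrite exchange_big.
Qed.

Lemma PP_bound (T : finType) (e : rel T) (S : {set T}) : #|S| ^ 2 <= fdeg e * PP e S.
Proof.
apply: leq_trans (cs_degrees (ideg e S) S) _; rewrite leq_mul2r; apply/orP; right.
by rewrite /fdeg; apply: (@leq_bigmax _ (fun S => num_distinct_degrees e S) S).
Qed.

Lemma fib_xy (T : finType) (e : rel T) (x y : T) (Pr : {set T} -> bool) :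
  (forall S, Pr S = Pr (S :\: Aset e x y)) ->
  (\sum_(S : {set T}) (Pr S && (#|S :&: Aset e x y| == #|S :&: Aset e y x|) : nat))
     * 2 ^ #|Aset e x y|
  <= 'C(#|Aset e x y|, #|Aset e x y|./2) * \sum_(S : {set T}) (Pr S : nat).
Proof.
move=> hPr; apply: (fiber (k := fun S => #|S :&: Aset e y x|)) => // S.
apply: eq_card => w; rewrite /Aset !inE.
by case: (e x w); case: (e y w); rewrite /= ?andbF ?andbT.
Qed.

Lemma cc_bound (T : finType) (e : rel T) (u v : T) : simple_graph e -> u != v ->
  cc e u v * 2 ^ aval e u v <= 'C(aval e u v, (aval e u v)./2) * m2 u v.
Proof.
move=> [sym irr] uv.
have hP x y : (x == u) && (y == v) || (x == v) && (y == u) ->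
    forall S : {set T}, ((u \in S) && (v \in S)) = ((u \in S :\: Aset e x y) && (v \in S :\: Aset e x y)).
  move=> hxy S; rewrite /Aset !inE.
  by case/orP: hxy => /andP[/eqP -> /eqP ->]; rewrite !irr ?eqxx /= ?andbF /= ?andbT.
have ccE : cc e u v = \sum_(S : {set T}) ((u \in S) && (v \in S) &&
    (#|S :&: Aset e u v| == #|S :&: Aset e v u|) : nat).
  apply: eq_bigr => S _; case uS: (u \in S); case vS: (v \in S) => //=.
  by rewrite ideg_eq.
have b1 := fib_xy (hP u v ltac:(by rewrite !eqxx)).
have b2 := fib_xy (hP v u ltac:(by rewrite !eqxx orbT)).
rewrite /aval; case: (leqP #|Aset e v u| #|Aset e u v|) => h.
- by rewrite ccE; apply: b1.
- rewrite ccE.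
  rewrite (eq_bigr (fun S : {set T} => ((u \in S) && (v \in S) &&
    (#|S :&: Aset e v u| == #|S :&: Aset e u v|) : nat))); last first.
    by move=> S _; rewrite eq_sym.
  by apply: b2.
Qed.

Lemma m2_diag (T : finType) (u : T) : 2 * m2 u u = 2 ^ #|T|.
Proof.
rewrite -(cnt1E u) /m2; congr (2 * _); apply: eq_bigr => S _; by rewrite andbb.
Qed.

Lemma m2_off (T : finType) (u v : T) : u != v -> 4 * m2 u v = 2 ^ #|T|.
Proof. by move=> uv; rewrite -(cnt1E u) -(cnt2E uv) mulnA. Qed.

Lemma cc_diag (T : finType) (e : rel T) (u : T) : cc e u u = m2 u u.
Proof. by apply: eq_bigr => S _; rewrite eqxx andbT. Qed.

Lemma pair_bound (T : finType) (e : rel T) (u v : T) : simple_graph e -> u != v ->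
  4 * cc e u v * (4 * cc e u v) * (aval e u v).+1 <= 2 ^ #|T| * 2 ^ #|T|.
Proof.
move=> ge uv.
have h := cc_bound ge uv.
set a := aval e u v in h *; set c := cc e u v in h *.
have h4 : 4 * c * 2 ^ a <= 'C(a, a./2) * 2 ^ #|T|.
  rewrite -(m2_off uv); nia.
have hb := half_binom_bound a.
have sq : (4 * c * 2 ^ a) ^ 2 * a.+1 <= ('C(a, a./2) * 2 ^ #|T|) ^ 2 * a.+1.
  by rewrite leq_mul2r leq_sqr h4 orbT.
have e4 : 4 ^ a = (2 ^ a) ^ 2 by rewrite -expnM mulnC expnM.
have : (4 * c * (4 * c) * a.+1) * 4 ^ a <= (2 ^ #|T| * 2 ^ #|T|) * 4 ^ a.
  apply: leq_trans (_ : ('C(a, a./2) * 2 ^ #|T|) ^ 2 * a.+1 <= _).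
    apply: leq_trans sq; rewrite e4; apply: eq_leq; rewrite !expnMn; nia.
  rewrite expnMn mulnAC; apply: leq_trans (_ : 4 ^ a * (2 ^ #|T|) ^ 2 <= _).
    by rewrite leq_mul2r hb orbT.
  by rewrite mulnC [(2 ^ #|T|) ^ 2]expnS expn1.
by rewrite leq_mul2r expn_eq0.
Qed.

Lemma main_nat (T : finType) (e : rel T) : simple_graph e -> 0 < #|T| ->
  exists u : T, 2 ^ #|T| * (#|T|).+1 <=
     fdeg e * (2 * 2 ^ #|T| + \sum_(v | v != u) 4 * cc e u v).
Proof.
move=> ge n0.
set n := #|T| in n0 *; set Q := 2 ^ n; set t := fdeg e.
set W := fun u => \sum_(v | v != u) 4 * cc e u v.
have hconst (u : T) : \sum_(v | v != u) Q = n.-1 * Q.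
  rewrite sum_nat_cond_const; congr (_ * _).
  have -> : n.-1 = #|[set~ u]| by rewrite cardsC1.
  by apply: eq_card => v; rewrite !inE.
have L : 4 * \sum_(S : {set T}) #|S| ^ 2 = n * (Q * n.+1).
  rewrite sumsq big_distrr /=.
  transitivity (\sum_(u : T) (Q * n.+1)); last by rewrite sum_nat_const.
  apply: eq_bigr => u _; rewrite big_distrr (bigD1 u) //= -[4]/(2 * 2) -mulnA m2_diag.
  rewrite (eq_bigr (fun _ => Q)); last by move=> v vu; rewrite m2_off // eq_sym.
  rewrite hconst -/n -/Q; clearbody Q; case: n n0 {hconst} => // k _ /=; lia.
have R : 4 * \sum_(S : {set T}) PP e S = \sum_(u : T) (2 * Q + W u).
  rewrite sumPP big_distrr /=; apply: eq_bigr => u _.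
  by rewrite big_distrr (bigD1 u) //= cc_diag -[4]/(2 * 2) -mulnA m2_diag.
have I : \sum_(S : {set T}) #|S| ^ 2 <= t * \sum_(S : {set T}) PP e S.
  by rewrite big_distrr; apply: leq_sum => S _; apply: PP_bound.
have [u0 _] : exists u0 : T, true by move/card_gt0P: n0 => [x _]; exists x.
pose us := [arg max_(u > u0) W u].
have Mx : \sum_(u : T) (2 * Q + W u) <= n * (2 * Q + W us).
  rewrite /n -sum_nat_const; apply: leq_sum => u _; rewrite leq_add2l /us.
  by case: arg_maxnP => // v _ /(_ u isT).
exists us.
have : n * (Q * n.+1) <= n * (t * (2 * Q + W us)).
  rewrite -L; apply: leq_trans (_ : 4 * (t * \sum_(S : {set T}) PP e S) <= _).
    by rewrite leq_mul2l I.
  by rewrite mulnCA R mulnCA leq_mul2l Mx orbT.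
rewrite leq_mul2l; case/orP => // /eqP h.
by move: n0; rewrite h.
Qed.

Open Scope R_scope.

Lemma layer_step (W Q K R m rest : R) :
  0 <= W -> 0 <= Q -> 0 <= K -> 1 <= m -> 0 < R ->
  W * W * R <= Q * Q -> m <= K * R -> rest <= 2 * Q * sqrt (K * (m - 1)) ->
  W + rest <= 2 * Q * sqrt (K * m).
Proof.
move=> W0 Q0 K0 m1 R0 hW hm hr.
have Kp : 0 < K by nra.
set a := sqrt (K * m); set b := sqrt (K * (m - 1)).
have a2 : a * a = K * m by rewrite /a sqrt_sqrt; nra.
have b2 : b * b = K * (m - 1) by rewrite /b sqrt_sqrt; nra.
have a0 : 0 < a by apply: sqrt_lt_R0; nra.
have b0 : 0 <= b by apply: sqrt_pos.
have Wa : W * a <= K * Q.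
  have h : (W * a) * (W * a) <= (K * Q) * (K * Q).
    have : W * W * (K * m) <= W * W * (K * (K * R)) by apply: Rmult_le_compat_l; nra.
    nra.
  apply: Rnot_lt_le => H; have : 0 <= K * Q by nra.
  move=> h2; have : (K * Q) * (K * Q) < (W * a) * (W * a) by apply: Rmult_le_0_lt_compat.
  lra.
have ab : 2 * a * b <= K * (2 * m - 1).
  have h : (2 * a * b) * (2 * a * b) <= (K * (2 * m - 1)) * (K * (2 * m - 1)).
    have -> : (2 * a * b) * (2 * a * b) = 4 * (a * a) * (b * b) by ring.
    rewrite a2 b2; nra.
  apply: Rnot_lt_le => H; have : 0 <= K * (2 * m - 1) by nra.
  move=> h2; have : (K * (2 * m - 1)) * (K * (2 * m - 1)) < (2 * a * b) * (2 * a * b) by apply: Rmult_le_0_lt_compat.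
  lra.
have Qab : Q * (2 * a * b) <= Q * (K * (2 * m - 1)) by apply: Rmult_le_compat_l.
have key : (W + 2 * Q * b) * a <= (2 * Q * a) * a by nra.
have h : W + 2 * Q * b <= 2 * Q * a by apply: (Rmult_le_reg_r a).
apply: (Rle_trans _ (W + 2 * Q * b)); last exact h.
by apply: Rplus_le_compat_l; exact hr.
Qed.

Lemma INR_addn (a b : nat) : INR (a + b)%nat = INR a + INR b.
Proof. exact: plus_INR. Qed.
Lemma INR_muln (a b : nat) : INR (a * b)%nat = INR a * INR b.
Proof. exact: mult_INR. Qed.
Lemma INR_leq (a b : nat) : (a <= b)%nat -> INR a <= INR b.
Proof. by move/leP; apply: le_INR. Qed.

Lemma layer (T : finType) (r w : T -> nat) (K Q : nat) :
  (forall v, (w v * w v * (r v).+1 <= Q * Q)%nat) ->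
  forall X : {set T}, (forall s, (0 < s)%nat -> (#|[set v in X | (r v < s)%nat]| <= K * s)%nat) ->
  INR (\sum_(v in X) w v) <= 2 * INR Q * sqrt (INR K * INR #|X|).
Proof.
move=> hw X; move: {2}#|X| (leqnn #|X|) => n; elim: n X => [|n IH] X hX hcnt.
  have -> : X = set0 by apply/eqP; rewrite -cards_eq0; move: hX; case: #|X|.
  rewrite big_set0 /=; have := sqrt_pos (INR K * INR #|@set0 T|); have := pos_INR Q; nra.
case: (set_0Vmem X) => [->|[x xX]].
  rewrite big_set0 /=; have := sqrt_pos (INR K * INR #|@set0 T|); have := pos_INR Q; nra.
case: (@arg_maxnP T x (fun v => v \in X) r xX) => v0 v0X maxv0.
have hm : (#|X| <= K * (r v0).+1)%nat.
  have -> : X = [set v in X | (r v < (r v0).+1)%nat].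
    apply/setP => v; rewrite inE; case vX: (v \in X) => //=.
    by have := maxv0 v vX; rewrite /= ltnS => ->.
  by apply: hcnt.
have cD : #|X| = (#|X :\ v0|).+1 by rewrite (cardsD1 v0 X) v0X.
have hX' : (#|X :\ v0| <= n)%nat by move: hX; rewrite cD.
have hcnt' : forall s, (0 < s)%nat -> (#|[set v in X :\ v0 | (r v < s)%nat]| <= K * s)%nat.
  move=> s s0; apply: leq_trans (hcnt s s0); apply: subset_leq_card; apply/subsetP => v.
  by rewrite !inE => /andP[/andP[_ ->] ->].
have IH' := IH _ hX' hcnt'.
rewrite (big_setD1 v0 v0X) /= INR_addn.
apply: (layer_step (R := INR (r v0).+1)).
- exact: pos_INR.
- exact: pos_INR.
- exact: pos_INR.
- rewrite cD S_INR; have := pos_INR #|X :\ v0|; lra.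
- apply: lt_0_INR; apply/ltP; done.
- by rewrite -!INR_muln; apply: INR_leq.
- by rewrite -INR_muln; apply: INR_leq.
- by rewrite cD S_INR; have -> : INR #|X :\ v0| + 1 - 1 = INR #|X :\ v0| by ring.
Qed.

Lemma final_real (n h t : R) : 1 <= n -> 1 <= h -> 0 <= t ->
  n + 1 <= t * (2 + 4 * sqrt (h * n)) -> t >= / 250 * sqrt (n / h).
Proof.
move=> n1 h1 t0 H.
have a2 : sqrt n * sqrt n = n by apply: sqrt_sqrt; lra.
have b2 : sqrt h * sqrt h = h by apply: sqrt_sqrt; lra.
have a1 : 1 <= sqrt n by rewrite -sqrt_1; apply: sqrt_le_1_alt.
have b1 : 1 <= sqrt h by rewrite -sqrt_1; apply: sqrt_le_1_alt.
rewrite sqrt_mult in H; try lra.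
rewrite sqrt_div_alt; last lra.
set a := sqrt n in a2 a1 H *; set b := sqrt h in b2 b1 H *.
have ab : 1 <= b * a by nra.
have H2 : a * a < 6 * t * b * a by nra.
have H3 : a < 6 * t * b by nra.
have bp : 0 < b by lra.
apply: Rle_ge.
have -> : / 250 * (a / b) = (a / b) / 250 by field; lra.
have : a / b < 6 * t.
  apply: (Rmult_lt_reg_r b) => //; rewrite /Rdiv Rmult_assoc Rinv_l; lra.
lra.
Qed.

Lemma W_bound (T : finType) (e : rel T) (u : T) : simple_graph e ->
  INR (\sum_(v | v != u) 4 * cc e u v)%nat <=
  4 * INR (2 ^ #|T|)%nat * sqrt (INR (homn e) * INR #|T|).
Proof.
move=> ge.
set w := fun v => if v == u then 0%nat else (4 * cc e u v)%nat.
set X := [set v | v != u].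
have hw : forall v, (w v * w v * (aval e u v).+1 <= 2 ^ #|T| * 2 ^ #|T|)%nat.
  move=> v; rewrite /w; case: (eqVneq v u) => [_|vu]; first by rewrite !mul0n.
  by apply: (pair_bound ge); rewrite eq_sym.
have hcnt : forall s, (0 < s)%nat ->
    (#|[set v in X | (aval e u v < s)%nat]| <= 4 * homn e * s)%nat.
  move=> s s0; apply: leq_trans (_ : #|[set v | (aval e u v <= s.-1)%nat]| <= _)%nat.
    apply: subset_leq_card; apply/subsetP => v; rewrite !inE => /andP[_ h].
    by rewrite -ltnS prednK.
  apply: leq_trans (cluster u s.-1 ge) _.
  case: s s0 => // s _ /=; nia.
have L := layer hw hcnt.
have E : (\sum_(v in X) w v = \sum_(v | v != u) 4 * cc e u v)%nat.
  rewrite /X (eq_bigl (fun v => v != u)); last by move=> v; rewrite inE.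
  by apply: eq_bigr => v /negbTE; rewrite /w => ->.
rewrite -E; apply: (Rle_trans _ _ _ L).
have cX : INR #|X| <= INR #|T|.
  apply: INR_leq. exact: (@max_card T (mem X)).
have hK : INR (4 * homn e)%nat = 4 * INR (homn e) by rewrite INR_muln /=; ring.
rewrite hK.
have s1 : sqrt (4 * INR (homn e) * INR #|X|) <= 2 * sqrt (INR (homn e) * INR #|T|).
  have -> : 2 = sqrt 4.
    have -> : 4 = 2 * 2 by ring.
    by rewrite sqrt_square; lra.
  rewrite -sqrt_mult; try lra; last first.
    by apply: Rmult_le_pos; apply: pos_INR.
  apply: sqrt_le_1_alt; rewrite Rmult_assoc; apply: Rmult_le_compat_l; first lra.
  by apply: Rmult_le_compat_l => //; apply: pos_INR.
have := pos_INR (2 ^ #|T|)%nat; nra.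
Qed.

Unset Implicit Arguments.

Theorem theorem1p1 (T : finType) (e : rel T) :
  simple_graph e -> (1 <= #|T|)%nat ->
  INR (fdeg e) >= / 250 * sqrt (INR (#|T|)%nat / INR (homn e)).
Proof.
move=> ge n1.
have [u hu] := main_nat ge n1.
have hW := W_bound u ge.
have h1 : (1 <= homn e)%nat.
  case/card_gt0P: n1 => x _.
  apply: leq_trans (hom_ge (S := [set x]) _); first by rewrite cards1.
  apply/orP; right; apply/forallP => a; apply/implyP; rewrite inE => /eqP ->.
  apply/forallP => b; apply/implyP; rewrite inE => /eqP ->.
  by case: ge => _ irr; rewrite irr.
have hu' := INR_leq hu.
rewrite !INR_muln in hu'.
rewrite INR_addn in hu'.
rewrite S_INR in hu'.
rewrite INR_muln in hu'.
set Q := INR (2 ^ #|T|)%nat in hu' hW.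
set W := INR (\sum_(v | v != u) 4 * cc e u v)%nat in hu' hW.
set s := sqrt (INR (homn e) * INR #|T|) in hW *.
have Qp : 0 < Q by apply: lt_0_INR; apply/ltP; rewrite expn_gt0.
have t0 := pos_INR (fdeg e).
apply: final_real.
- by have := INR_leq n1.
- by have := INR_leq h1.
- exact: t0.
- have e2 : INR 2 = 2 by [].
  rewrite e2 in hu'.
  apply: (Rmult_le_reg_l Q) => //.
  apply: (Rle_trans _ _ _ hu').
  have : INR (fdeg e) * W <= INR (fdeg e) * (4 * Q * s) by apply: Rmult_le_compat_l.
  move=> H; rewrite -/s; nra.
Qed.
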